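(* Let $n\ge2$, $d\ge1$, $r\ge3$ with $dr=n$. For every vertex $(a,x)$ of $Q_n(d,r)$ with $x\in\{0,\dots,r-1\}$, the distance between $(0_n,0)$ and $(a,x)$ in $Q_n(d,r)$ is $$\mathrm{dist}((0_n,0),(a,x))=\|a\|+\min\{\,r+x-2\,\mathrm{leap}_1(a,x),\; 2r-x-2\,\mathrm{leap}_2(a,x)\,\}.$$
   Context: $\mathbb{Z}_2^n=\{0,1\}^n$ with coordinatewise addition mod 2; $e_i$ is the $i$-th standard basis vector, subscripts read modulo $n$; $\|a\|$ is the Hamming weight. The recursive cube of rings $Q_n(d,r)$ (for $n\ge d$, $dr\equiv0\pmod n$) is the simple graph on $\mathbb{Z}_2^n\times\mathbb{Z}_r$ in which $(a,x)$ is adjacent to $(a+e_{i+dx},x)$ for $1\le i\le d$ and to $(a,x\pm1)$. Definition of the leaps (case $dr=n$): for $(a,x)$ with $x\in\{0,\dots,r-1\}$, let $L$ be the non-decreasing list obtained by sorting the multiset consisting of $0$, $x$, $r$, and the numbers $\lfloor (i-1)/d\rfloor$ for each $i\in\{1,\dots,n\}$ with $a_i=1$. Then $\mathrm{leap}_1(a,x)=0$ if $x=0$, and otherwise $\mathrm{leap}_1(a,x)$ is the maximum difference between two consecutive entries of $L$ that are both $\le x$; $\mathrm{leap}_2(a,x)$ is the maximum difference between two consecutive entries of $L$ that are both $\ge x$. *)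

(* Defs.v *)
From mathcomp Require Import all_boot all_order.
Set Implicit Arguments. Unset Strict Implicit. Unset Printing Implicit Defensive.

(* Vertices of Q_n(d,r): Z_2^n x Z_r, as (bit vector indexed by 'I_n, x : 'I_r).
   Coordinates are 0-based: paper's coordinate i (1..n) is index i-1. *)
Definition Qvert (n r : nat) := ({ffun 'I_n -> bool} * 'I_r)%type.

Definition flipb n (a : {ffun 'I_n -> bool}) (k : nat) : {ffun 'I_n -> bool} :=
  [ffun i => a i (+) (val i == k)].

(* Adjacency: (a,x) ~ (a + e_{i+dx}, x) for 1<=i<=d (subscripts mod n), i.e.
   0-based index (j + d*x) mod n for j < d; and (a,x) ~ (a, x +- 1 mod r). *)
Definition Qadj (n d r : nat) : rel (Qvert n r) :=
  fun u v =>
    ((u.2 == v.2) && [exists j : 'I_d, v.1 == flipb u.1 ((j + d * u.2) %% n)])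
    || ((u.1 == v.1) &&
        ((val v.2 == (u.2 + 1) %% r) || (val u.2 == (v.2 + 1) %% r))).

Definition is_distance (T : eqType) (e : rel T) (u v : T) (k : nat) : Prop :=
  (exists p : seq T, [/\ path e u p, last u p = v & size p = k]) /\
  (forall p : seq T, path e u p -> last u p = v -> k <= size p).

Definition hweight n (a : {ffun 'I_n -> bool}) : nat := #|[pred i | a i]|.

(* The sorted list L: 0, x, r, and floor((i-1)/d) for each (1-based) i with a_i = 1 *)
Definition leapL n d r (a : {ffun 'I_n -> bool}) (x : nat) : seq nat :=
  sort leq ([:: 0; x; r] ++ [seq (val i) %/ d | i <- enum 'I_n & a i]).

Definition consec (s : seq nat) : seq (nat * nat) := zip s (behead s).

Definition leap1 n d r (a : {ffun 'I_n -> bool}) (x : nat) : nat :=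
  if x == 0 then 0 else
  \max_(p <- consec (leapL d r a x) | (p.1 <= x) && (p.2 <= x)) (p.2 - p.1).

Definition leap2 n d r (a : {ffun 'I_n -> bool}) (x : nat) : nat :=
  \max_(p <- consec (leapL d r a x) | (x <= p.1) && (x <= p.2)) (p.2 - p.1).

(* Main.v *)
Require Import Defs.
From mathcomp Require Import all_boot all_order zify.
Set Implicit Arguments. Unset Strict Implicit. Unset Printing Implicit Defensive.

Definition free (S : pred nat) (p q : nat) : Prop :=
  forall s, S s -> ~~ ((p < s) && (s < q)).

Definition isC (r : nat) (S : pred nat) (x c : nat) : Prop :=
 (exists p q, free S p q /\
    ((p <= q /\ q <= x /\ c = r + x - 2*(q-p)) \/
     (x <= p /\ p <= q /\ q <= r /\ c = 2*r - x - 2*(q-p)))) /\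
 (forall p q, free S p q ->
    (p <= q -> q <= x -> c <= r + x - 2*(q-p)) /\
    (x <= p -> p <= q -> q <= r -> c <= 2*r - x - 2*(q-p))).

Lemma free_sub S p q p' q' : free S p q -> p <= p' -> q' <= q -> free S p' q'.
Proof.
move=> H h1 h2 s Ss; apply/negP => /andP[a b].
by move: (H s Ss); rewrite (leq_ltn_trans h1 a) (leq_trans b h2).
Qed.

Lemma free_triv S p q : q <= p.+1 -> free S p q.
Proof. move=> h s _; apply/negP => /andP[a b]; lia. Qed.

Lemma isC_uniq r S x c1 c2 : isC r S x c1 -> isC r S x c2 -> c1 = c2.
Proof.
move=> [[p1 [q1 [f1 w1]]] b1] [[p2 [q2 [f2 w2]]] b2].
have h1 := b1 p2 q2 f2. have h2 := b2 p1 q1 f1.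
apply/eqP; rewrite eqn_leq; apply/andP; split.
- case: w2 => [[? [? ->]]|[? [? [? ->]]]]; [exact: h1.1| exact: h1.2].
- case: w1 => [[? [? ->]]|[? [? [? ->]]]]; [exact: h2.1| exact: h2.2].
Qed.

Lemma isC_step r S x c c' : isC r S x c -> isC r S x.+1 c' -> x.+1 < r ->
  c' <= c.+1 /\ c <= c'.+1.
Proof.
move=> [[p [q [f w]]] b] [[p' [q' [f' w']]] b'] hx; split.
- case: w => [[h1 [h2 ->]]|[h1 [h2 [h3 ->]]]].
    have := (b' p q f).1 h1 (leq_trans h2 (leqnSn _)); lia.
  case: (ltnP x p) => hp.
    have := (b' p q f).2 hp h2 h3; lia.
  case: (ltnP x q) => hq.
    have := (b' x.+1 q (free_sub f (leq_trans hp (leqnSn _)) (leqnn _))).2 (leqnn _) hq h3; lia.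
  have := (b' x.+1 x.+1 (free_triv (leqnSn _))).2 (leqnn _) (leqnn _) (ltnW hx); lia.
- case: w' => [[h1 [h2 ->]]|[h1 [h2 [h3 ->]]]].
    case: (ltnP x q') => hq.
      case: (ltnP x p') => hp.
        have := (b x x (free_triv (leqnSn _))).1 (leqnn _) (leqnn _); lia.
      have := (b p' x (free_sub f' (leqnn _) (ltnW hq))).1 hp (leqnn _); lia.
    have := (b p' q' f').1 h1 hq; lia.
  have := (b p' q' f').2 (ltnW h1) h2 h3; lia.
Qed.

Lemma isC_wrap r S c c0 : 0 < r -> isC r S r.-1 c -> isC r S 0 c0 ->
  c0 <= c.+1 /\ c <= c0.+1.
Proof.
move=> hr [[p [q [f w]]] b] [[p' [q' [f' w']]] b']; split.
- case: w => [[h1 [h2 ->]]|[h1 [h2 [h3 ->]]]].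
    have := (b' p q f).2 (leq0n _) h1 (leq_trans h2 (leq_pred _)); lia.
  have := (b' 0 0 (free_triv (leqnSn _))).1 (leqnn _) (leqnn _); lia.
- case: w' => [[h1 [h2 ->]]|[h1 [h2 [h3 ->]]]].
    have := (b r r (free_triv (leqnSn _))).2 (leq_pred _) (leqnn _) (leqnn _); lia.
  case: (ltnP q' r) => hq.
    have hq1 : q' <= r.-1 by lia.
    have := (b p' q' f').1 h2 hq1; lia.
  case: (ltnP p' r) => hp.
    have hp1 : p' <= r.-1 by lia.
    have := (b p' r.-1 (free_sub f' (leqnn _) (leq_trans (leq_pred _) hq))).1 hp1 (leqnn _); lia.
  have := (b 0 0 (free_triv (leqnSn _))).1 (leqnn _) (leq0n _); lia.
Qed.

Lemma isC_desc r S (cf : nat -> nat) x : 2 < r ->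
  (forall y, y < r -> isC r S y (cf y)) -> (forall s, S s -> s < r) ->
  x < r -> ~~ S x -> (0 < x \/ exists s, S s) ->
  (x.+1 < r /\ (cf x.+1).+1 <= cf x) \/ (x.+1 = r /\ (cf 0).+1 <= cf x) \/
  (0 < x /\ (cf x.-1).+1 <= cf x) \/ (x = 0 /\ (cf r.-1).+1 <= cf x).
Proof.
move=> hr hC hS hx nSx hne.
have [[p [q [f w]]] _] := hC x hx.
have hr1 : r.-1 < r by lia.
case: w => [[h1 [h2 ->]]|[h1 [h2 [h3 ->]]]].
- case: (ltnP q x) => hq.
    right; right; left; split; first lia.
    have hx1 : x.-1 < r by lia.
    have hq1 : q <= x.-1 by lia.
    have := ((hC _ hx1).2 p q f).1 h1 hq1; lia.
  have eqx : q = x by lia.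
  have fr : free S p x.+1.
    move=> s Ss; apply/negP => /andP[a b].
    case: (ltnP s x) => hs.
      by move: (f s Ss); rewrite a eqx hs.
    have esx : s = x by lia.
    by move: nSx; rewrite -esx Ss.
  case: (ltnP x.+1 r) => hx1.
    left; split=> //.
    have hpx : p <= x.+1 by lia.
    have := ((hC _ hx1).2 p x.+1 fr).1 hpx (leqnn _); lia.
  right; left; split; first lia.
  have h0 : 0 < r by lia.
  have fr' : free S p r by apply: free_sub fr (leqnn _) _; lia.
  have := ((hC _ h0).2 p r fr').2 (leq0n _) _ (leqnn _); lia.
- case: (ltnP x p) => hp.
    case: (ltnP x.+1 r) => hx1.
      left; split=> //.
      have := ((hC _ hx1).2 p q f).2 hp h2 h3; lia.
    right; left; split; first lia.
    have h0 : 0 < r by lia.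
    have := ((hC _ h0).2 0 0 (free_triv (leqnSn _))).1 (leqnn _) (leqnn _); lia.
  have epx : p = x by lia.
  case: (posnP x) => hx0.
    have ep0 : p = 0 by lia.
    case: (ltnP q r) => hq.
      right; right; right; split=> //.
      have hq1 : q <= r.-1 by lia.
      have := ((hC _ hr1).2 p q f).1 h2 hq1; lia.
    exfalso; case: hne => [|[s Ss]]; first lia.
    have := hS s Ss; have := f s Ss.
    case: (posnP s) => hs0.
      by move: nSx; rewrite hx0 -hs0 Ss.
    rewrite ep0 hs0 /=; lia.
  right; right; left; split=> //.
  have hx1 : x.-1 < r by lia.
  have fr : free S x.-1 q.
    move=> s Ss; apply/negP => /andP[a b].
    case: (ltnP x s) => hs.
      by move: (f s Ss); rewrite epx hs b.
    have esx : s = x by lia.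
    by move: nSx; rewrite -esx Ss.
  have := ((hC _ hx1).2 x.-1 q fr).2 (leqnn _) _ h3; lia.
Qed.

Lemma free_change (S S' : pred nat) (x p q : nat) : (forall y, y != x -> S' y -> S y) ->
  free S p q -> (q <= x \/ x <= p) -> free S' p q.
Proof.
move=> hS f hq s Ss; apply/negP => /andP[a b].
case: (eqVneq s x) => [esx|nsx].
  rewrite esx in a b; lia.
by move: (f s (hS s nsx Ss)); rewrite a b.
Qed.

Lemma isC_change r (S S' : pred nat) x c : (forall y, y != x -> S y = S' y) ->
  isC r S x c -> isC r S' x c.
Proof.
move=> hS [[p [q [f w]]] b]; split.
  exists p, q; split=> //.
  have hS' : forall y, y != x -> S' y -> S y by move=> y ny; rewrite hS.
  apply: (free_change hS' f).
  case: w => [[_ [h _]]|[h _]]; [by left|by right].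
move=> p' q' f'; split.
  move=> h1 h2; apply: (b p' q' _).1 => //.
  have hS' : forall y, y != x -> S y -> S' y by move=> y ny; rewrite hS.
  by apply: (free_change hS' f'); left.
move=> h1 h2; apply: (b p' q' _).2 => //.
have hS' : forall y, y != x -> S y -> S' y by move=> y ny; rewrite hS.
by apply: (free_change hS' f'); right.
Qed.

Lemma sorted_head_le (h : nat) t c : sorted leq (h :: t) -> c \in t -> h <= c.
Proof.
move=> hs hc.
have := order_path_min leq_trans hs.
by move/allP => /(_ c hc).
Qed.

Lemma mem_zip1 (s t : seq nat) u v : (u, v) \in zip s t -> u \in s.
Proof.
elim: s t => [|h s IH] [|k t] //=.
rewrite !inE => /orP[/eqP [-> _]|/IH ->]; by rewrite ?eqxx ?orbT.
Qed.

Lemma consec_free (s : seq nat) u v : sorted leq s -> (u, v) \in consec s ->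
  u <= v /\ forall c, c \in s -> ~~ ((u < c) && (c < v)).
Proof.
elim: s => [|h t IH] //=.
case: t IH => [|h2 t] IH // hs.
have hs' : sorted leq (h2 :: t) := path_sorted hs.
have hh2 : h <= h2 by case/andP: hs.
change ((u, v) \in (h, h2) :: consec (h2 :: t) ->
  u <= v /\ forall c, c \in h :: h2 :: t -> ~~ ((u < c) && (c < v))).
rewrite inE => /orP[/eqP [-> ->]|hin].
  split=> // c; rewrite inE => /orP[/eqP ->|hc]; first by rewrite ltnn.
  have : h2 <= c.
    move: hc; rewrite inE => /orP[/eqP ->//|hc].
    exact: (@sorted_head_le h2 t c hs' hc).
  move=> h2c; apply/negP => /andP[_ b]; lia.
have [uv hc] := IH hs' hin.
split=> // c; rewrite inE => /orP[/eqP ->|]; last exact: hc.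
have : u \in h2 :: t by exact: mem_zip1 hin.
move=> hu'; have hu := @sorted_head_le h (h2 :: t) u hs hu'.
apply/negP => /andP[a _]; lia.
Qed.

Lemma consec_cover (s : seq nat) lo hi p q a b : sorted leq s -> a \in s -> b \in s ->
  lo <= a -> a <= p -> q <= b -> b <= hi -> p < q ->
  (forall c, c \in s -> ~~ ((p < c) && (c < q))) ->
  exists2 uv, uv \in consec s & [/\ lo <= uv.1, uv.1 <= p, q <= uv.2 & uv.2 <= hi].
Proof.
elim: s a => [|h t IH] a //.
case: t IH => [|h2 t] IH hs ha hb h1 h2' h3 h4 hpq hc.
  move: ha hb; rewrite !inE => /eqP ea /eqP eb; lia.
have hs' : sorted leq (h2 :: t) := path_sorted hs.
have hh2 : h <= h2 by case/andP: hs.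
change (exists2 uv, uv \in (h, h2) :: consec (h2 :: t) &
  [/\ lo <= uv.1, uv.1 <= p, q <= uv.2 & uv.2 <= hi]).
have hb' : b \in h2 :: t.
  move: hb; rewrite inE => /orP[/eqP eb|//].
  have : a = h \/ a \in h2 :: t by move: ha; rewrite inE => /orP[/eqP|]; [left|right].
  case=> [ea|ha']; first lia.
  have := @sorted_head_le h (h2 :: t) a hs ha'; lia.
case: (leqP h2 p) => hp.
  have [a' ha'1 [ha'2 ha'3]] : exists2 a', a' \in h2 :: t & lo <= a' /\ a' <= p.
    move: ha; rewrite inE => /orP[/eqP ea|ha].
      exists h2; first by rewrite inE eqxx.
      lia.
    by exists a.
  have hc' : forall c, c \in h2 :: t -> ~~ ((p < c) && (c < q)).
    by move=> c hcc; apply: hc; rewrite inE hcc orbT.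
  have [uv huv huv'] := IH a' hs' ha'1 hb' ha'2 ha'3 h3 h4 hpq hc'.
  by exists uv => //; rewrite inE huv orbT.
have hq : q <= h2.
  have := hc h2; rewrite !inE eqxx orbT => /(_ isT).
  rewrite hp /=; lia.
have ea : a = h.
  move: ha; rewrite inE => /orP[/eqP //|ha].
  have := @sorted_head_le h2 t a hs'.
  move: ha; rewrite inE => /orP[/eqP ea'|ha /(_ ha)]; lia.
have hb2 : h2 <= b.
  move: hb'; rewrite inE => /orP[/eqP ->//|hb'].
  exact: (@sorted_head_le h2 t b hs' hb').
exists (h, h2); first by rewrite inE eqxx.
split=> /=; lia.
Qed.

Lemma mem_zip2 (s t : seq nat) u v : (u, v) \in zip s t -> v \in t.
Proof.
elim: s t => [|h s IH] [|k t] //=.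
rewrite !inE => /orP[/eqP [_ ->]|/IH ->]; by rewrite ?eqxx ?orbT.
Qed.

Lemma bigmax_attained (T : eqType) (s : seq T) (P : pred T) (F : T -> nat) :
  \max_(i <- s | P i) F i = 0 \/
  exists2 i, i \in s & P i /\ F i = \max_(i <- s | P i) F i.
Proof.
elim: s => [|h s IH]; first by left; rewrite big_nil.
rewrite big_cons; case: ifP => Ph.
  case: (leqP (F h) (\max_(i <- s | P i) F i)) => hle.
    case: IH => [->|[i hi [Pi Fi]]]; first by left.
    by right; exists i; rewrite ?inE ?hi ?orbT.
  right; exists h; by rewrite ?inE ?eqxx.
case: IH => [->|[i hi [Pi Fi]]]; first by left.
by right; exists i; rewrite ?inE ?hi ?orbT.
Qed.

Definition Sb n d (a : {ffun 'I_n -> bool}) (k : nat) : bool :=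
  [exists i : 'I_n, a i && (i %/ d == k)].

Lemma memL n d r (a : {ffun 'I_n -> bool}) x c :
  (c \in leapL d r a x) = [|| c == 0, c == x, c == r | Sb d a c].
Proof.
rewrite /leapL mem_sort mem_cat !inE -!orbA; congr [|| _, _, _ | _].
apply/mapP/existsP => [[i] | [i /andP[ai /eqP <-]]].
  by rewrite mem_filter mem_enum andbT => ai ->; exists i; rewrite ai eqxx.
by exists i; rewrite // mem_filter mem_enum ai.
Qed.

Lemma Sb_lt n d r (a : {ffun 'I_n -> bool}) c : 0 < d -> d * r = n -> Sb d a c -> c < r.
Proof.
move=> hd hdr /existsP[i /andP[_ /eqP <-]].
rewrite ltn_divLR // mulnC hdr; exact: ltn_ord.
Qed.

Lemma sortedL n d r (a : {ffun 'I_n -> bool}) x : sorted leq (leapL d r a x).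
Proof. exact: (sort_sorted leq_total). Qed.

Lemma leap1_spec n d r (a : {ffun 'I_n -> bool}) (x : nat) : 0 < d -> d * r = n -> x < r ->
  (exists p q, free (Sb d a) p q /\ p <= q /\ q <= x /\ q - p = leap1 d r a x) /\
  (forall p q, free (Sb d a) p q -> p <= q -> q <= x -> q - p <= leap1 d r a x).
Proof.
move=> hd hdr hx; rewrite /leap1; case: eqP => [x0|/eqP xn0].
  split; first by exists 0, 0; split; [exact: free_triv|lia].
  move=> p q _ ? ?; lia.
split.
  case: (bigmax_attained (consec (leapL d r a x))
         (fun p : nat * nat => (p.1 <= x) && (p.2 <= x)) (fun p => p.2 - p.1)) =>
    [->|[[u v] huv [/andP[hu hv] /= <-]]].
    by exists 0, 0; split; [exact: free_triv|lia].
  have [uv hfree] := consec_free (sortedL d r a x) huv.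
  exists u, v; split=> //.
  move=> c Sc; apply: hfree; rewrite memL Sc !orbT //.
move=> p q hf hpq hqx.
case: (ltnP p q) => hpq'; last by rewrite (_ : q - p = 0) //; lia.
have h0 : 0 \in leapL d r a x by rewrite memL eqxx.
have hxL : x \in leapL d r a x by rewrite memL eqxx orbT.
have hnc : forall c, c \in leapL d r a x -> ~~ ((p < c) && (c < q)).
  move=> c; rewrite memL => /or4P[/eqP->|/eqP->|/eqP->|Sc].
  - apply/negP => /andP[a1 b1]; lia.
  - apply/negP => /andP[a1 b1]; lia.
  - apply/negP => /andP[a1 b1]; lia.
  - exact: hf.
have [[u v] huv /= [_ hu hv hv']] := consec_cover (lo := 0) (hi := x)
  (sortedL d r a x) h0 hxL (leq0n _) (leq0n _) hqx (leqnn _) hpq' hnc.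
apply: leq_trans (leq_bigmax_seq (u, v) huv _) => /=; first lia.
rewrite hv' andbT; lia.
Qed.

Lemma leap2_spec n d r (a : {ffun 'I_n -> bool}) (x : nat) : 0 < d -> d * r = n -> x < r ->
  (exists p q, free (Sb d a) p q /\ x <= p /\ p <= q /\ q <= r /\ q - p = leap2 d r a x) /\
  (forall p q, free (Sb d a) p q -> x <= p -> p <= q -> q <= r -> q - p <= leap2 d r a x).
Proof.
move=> hd hdr hx; rewrite /leap2.
have hLr : forall c, c \in leapL d r a x -> c <= r.
  move=> c; rewrite memL => /or4P[/eqP->|/eqP->|/eqP->|Sc]; try lia.
  exact: ltnW (Sb_lt hd hdr Sc).
split.
  case: (bigmax_attained (consec (leapL d r a x))
         (fun p : nat * nat => (x <= p.1) && (x <= p.2)) (fun p => p.2 - p.1)) =>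
    [->|[[u v] huv [/andP[hu hv] /= <-]]].
    exists x, x; split; [exact: free_triv|lia].
  have [uv hfree] := consec_free (sortedL d r a x) huv.
  have hvr : v <= r.
    apply: hLr; apply: (@mem_behead _ (leapL d r a x)); exact: mem_zip2 huv.
  exists u, v; split; last by move: hu => /= hu; lia.
  move=> c Sc; apply: hfree; rewrite memL Sc !orbT //.
move=> p q hf hxp hpq hqr.
case: (ltnP p q) => hpq'; last by rewrite (_ : q - p = 0) //; lia.
have h0 : r \in leapL d r a x by rewrite memL eqxx !orbT.
have hxL : x \in leapL d r a x by rewrite memL eqxx orbT.
have hnc : forall c, c \in leapL d r a x -> ~~ ((p < c) && (c < q)).
  move=> c; rewrite memL => /or4P[/eqP->|/eqP->|/eqP->|Sc].
  - apply/negP => /andP[a1 b1]; lia.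
  - apply/negP => /andP[a1 b1]; lia.
  - apply/negP => /andP[a1 b1]; lia.
  - exact: hf.
have [[u v] huv /= [hu hu' hv hv']] := consec_cover (lo := x) (hi := r)
  (sortedL d r a x) hxL h0 (leqnn _) hxp hqr (leqnn _) hpq' hnc.
apply: leq_trans (leq_bigmax_seq (u, v) huv _) => /=; first lia.
rewrite hu /=; lia.
Qed.

Lemma formula_isC n d r (a : {ffun 'I_n -> bool}) (x : nat) : 0 < d -> d * r = n -> x < r ->
  isC r (Sb d a) x (minn (r + x - 2 * leap1 d r a x) (2 * r - x - 2 * leap2 d r a x)).
Proof.
move=> hd hdr hx.
have [[p1 [q1 [f1 [h11 [h12 e1]]]]] b1] := leap1_spec a hd hdr hx.
have [[p2 [q2 [f2 [h21 [h22 [h23 e2]]]]]] b2] := leap2_spec a hd hdr hx.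
split.
  case: (leqP (r + x - 2 * leap1 d r a x) (2 * r - x - 2 * leap2 d r a x)) => hle.
    exists p1, q1; split=> //; left; lia.
  exists p2, q2; split=> //; right; lia.
move=> p q f; split.
  move=> hpq hqx; have := b1 p q f hpq hqx; lia.
move=> hxp hpq hqr; have := b2 p q f hxp hpq hqr; lia.
Qed.

Lemma hweight_flip n (a : {ffun 'I_n -> bool}) (i : 'I_n) :
  hweight (flipb a i) + a i = hweight a + ~~ a i.
Proof.
rewrite /hweight (cardD1 i) [in RHS](cardD1 i) !inE /flipb ffunE eqxx.
have -> : #|[predD1 [pred i0 | [ffun i1 => a i1 (+) (val i1 == val i)] i0] & i]|
        = #|[predD1 [pred i0 | a i0] & i]|.
  apply: eq_card => j; rewrite !inE ffunE.
  case: (eqVneq j i) => [->|nji] //=.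
  by rewrite (_ : (val j == val i) = false) ?addbF //; apply/eqP => /val_inj; apply/eqP.
set m := #|_|; case: (a i) => /=; lia.
Qed.

Lemma Sb_flip n d (a : {ffun 'I_n -> bool}) (i : 'I_n) y : y != i %/ d ->
  Sb d (flipb a i) y = Sb d a y.
Proof.
move=> hy; apply/existsP/existsP => [][j /andP[hj /eqP hjy]]; exists j;
  rewrite hjy eqxx andbT; move: hj; rewrite /flipb ffunE;
  (have -> : (val j == val i) = false by
     apply/eqP => eji; move: hy; rewrite -hjy eji eqxx);
  by rewrite addbF.
Qed.

Section G.
Variables (n d r : nat).
Hypotheses (hd : 0 < d) (hr : 2 < r) (hdr : d * r = n).

Definition cF (a : {ffun 'I_n -> bool}) (y : nat) :=
  minn (r + y - 2 * leap1 d r a y) (2 * r - y - 2 * leap2 d r a y).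

Definition FF (v : Qvert n r) := hweight v.1 + cF v.1 v.2.

Lemma cF_isC a y : y < r -> isC r (Sb d a) y (cF a y).
Proof. move=> hy; exact: formula_isC. Qed.

Lemma cF_flip a (i : 'I_n) : i %/ d < r -> cF (flipb a i) (i %/ d) = cF a (i %/ d).
Proof.
move=> hi; apply: isC_uniq (cF_isC _ hi) _.
apply: isC_change (cF_isC _ hi) => y hy; by rewrite Sb_flip.
Qed.

Lemma cF_ring a y z : y < r -> z < r ->
  (z == (y + 1) %% r) || (y == (z + 1) %% r) -> cF a z <= (cF a y).+1.
Proof.
move=> hy hz.
have hr0 : 0 < r by lia.
have H1 : forall u, u.+1 < r -> cF a u.+1 <= (cF a u).+1 /\ cF a u <= (cF a u.+1).+1.
  move=> u hu; apply: isC_step (cF_isC _ (ltnW hu)) (cF_isC _ hu) hu.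
have H2 : cF a 0 <= (cF a r.-1).+1 /\ cF a r.-1 <= (cF a 0).+1.
  have hr1 : r.-1 < r by lia.
  exact: isC_wrap hr0 (cF_isC _ hr1) (cF_isC _ hr0).
case/orP => /eqP e.
  case: (ltnP y.+1 r) => hy1.
    move: e; rewrite addn1 modn_small // => ->; exact: (H1 _ hy1).1.
  have ey : y = r.-1 by lia.
  move: e; rewrite ey addn1 prednK // modnn => ->; exact: H2.1.
case: (ltnP z.+1 r) => hz1.
  move: e; rewrite addn1 modn_small // => ->; exact: (H1 _ hz1).2.
have ez : z = r.-1 by lia.
move: e; rewrite ez addn1 prednK // modnn => ->; exact: H2.2.
Qed.

Lemma flip_idx (j : 'I_d) (x : 'I_r) : (j + d * x) %% n < n /\
  (j + d * x) %% n = j + d * x /\ (j + d * x) %/ d = x.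
Proof.
have hjx : j + d * x < n.
  rewrite -hdr; have := ltn_ord j; have := ltn_ord x; nia.
rewrite modn_small //; split=> //; split=> //.
by rewrite mulnC divnDMl // divn_small ?ltn_ord.
Qed.

Lemma FF_edge u v : Qadj d u v -> FF v <= (FF u).+1.
Proof.
case: u v => [a x] [b y]; rewrite /Qadj /FF /= => /orP[/andP[/eqP exy /existsP[j /eqP eb]]|/andP[/eqP eab hring]].
  subst y b.
  have [hk [ek ekd]] := flip_idx j x.
  set i0 : 'I_n := Ordinal hk.
  have -> : flipb a ((j + d * x) %% n) = flipb a i0 by [].
  have hi0 : i0 %/ d = x by rewrite /= ek ekd.
  have hxr : i0 %/ d < r by rewrite hi0.
  have := cF_flip a hxr; rewrite hi0 => ->.
  have := hweight_flip a i0; case: (a i0) => /=; lia.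
subst b; have := cF_ring a (ltn_ord x) (ltn_ord y) hring; lia.
Qed.
End G.

Section H.
Variables (n d r : nat).
Hypotheses (hd : 0 < d) (hr : 2 < r) (hdr : d * r = n).
Variable x0 : 'I_r.
Hypothesis hx0 : val x0 = 0.

Let start : Qvert n r := ([ffun => false], x0).

Lemma FF_start : FF d start = 0.
Proof.
rewrite /FF /start /=.
have -> : hweight ([ffun=> false] : {ffun 'I_n -> bool}) = 0.
  by apply: eq_card0 => i; rewrite inE ffunE.
rewrite hx0 add0n.
have hr0 : 0 < r by lia.
have [_ b] := cF_isC hd hdr [ffun=> false] hr0.
have f : free (Sb d ([ffun=> false] : {ffun 'I_n -> bool})) 0 r.
  move=> s /existsP[i]; by rewrite ffunE.
by have := (b 0 r f).2 (leqnn _) (leq0n _) (leqnn _); rewrite !subn0 subnn leqn0 => /eqP.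
Qed.

Lemma FF_path u p : path (@Qadj n d r) u p -> FF d (last u p) <= FF d u + size p.
Proof.
elim: p u => [|v p IH] u /=; first by rewrite addn0.
case/andP => huv hp.
have := FF_edge hd hr hdr huv; have := IH v hp; lia.
Qed.

Lemma flipbK (a : {ffun 'I_n -> bool}) k : flipb (flipb a k) k = a.
Proof. by apply/ffunP => i; rewrite !ffunE -addbA addbb addbF. Qed.

Lemma FF_pred (v : Qvert n r) : v != start ->
  exists w, Qadj d w v /\ (FF d w).+1 = FF d v.
Proof.
case: v => a x nv.
have hr1 : r.-1 < r by lia.
have hr0 : 0 < r by lia.
suff [w [hw1 hw2]] : exists w, Qadj d w (a, x) /\ (FF d w).+1 <= FF d (a, x).
  exists w; split=> //; have := FF_edge hd hr hdr hw1; lia.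
case Sx: (Sb d a x).
  case/existsP: Sx => i /andP[ai /eqP ix].
  pose j : 'I_d := Ordinal (ltn_pmod i hd).
  exists (flipb a i, x); split.
    apply/orP; left; rewrite eqxx /=; apply/existsP; exists j; apply/eqP.
    have [_ [-> _]] := flip_idx hd hr hdr j x.
    have -> : j + d * x = i.
      rewrite /= -ix; have := divn_eq i d; lia.
    by rewrite flipbK.
  rewrite /FF /=.
  have hxr : i %/ d < r by rewrite ix.
  have := cF_flip hd hdr a hxr; rewrite ix => ->.
  have := hweight_flip a i; rewrite ai /=; lia.
have hne : 0 < x \/ exists s, Sb d a s.
  case: (posnP x) => hx; last by left.
  case: (boolP [exists i, a i]) => [/existsP[i ai]|/existsPn na].
    by right; exists (i %/ d); apply/existsP; exists i; rewrite ai eqxx.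
  exfalso; move/eqP: nv; apply.
  have -> : a = [ffun => false] by apply/ffunP => i; rewrite ffunE; apply/negbTE.
  by congr pair; apply: val_inj; rewrite /= hx hx0.
have := isC_desc (cf := cF d r a) hr (fun y hy => cF_isC hd hdr a hy)
  (fun s hs => Sb_lt hd hdr hs) (ltn_ord x) (negbT Sx) hne.
case=> [[h1 h2]|[[h1 h2]|[[h1 h2]|[h1 h2]]]].
- exists (a, Ordinal h1); split; last by rewrite /FF /=; lia.
  have e : (x + 1) %% r = x.+1 by rewrite addn1 modn_small.
  by apply/orP; right; rewrite eqxx /= e eqxx orbT.
- exists (a, x0); split; last by rewrite /FF /= (_ : nat_of_ord x0 = 0); [lia|exact: hx0].
  have e : (x + 1) %% r = 0 by rewrite addn1 h1 modnn.
  have hx0' : nat_of_ord x0 = 0 := hx0.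
  by apply/orP; right; rewrite eqxx /= hx0' e eqxx orbT.
- have hy : x.-1 < r by have := ltn_ord x; lia.
  exists (a, Ordinal hy); split; last by rewrite /FF /=; lia.
  have e : (x.-1 + 1) %% r = x by rewrite addn1 prednK // modn_small.
  by apply/orP; right; rewrite eqxx /= e eqxx.
- exists (a, Ordinal hr1); split; last by rewrite /FF /=; move: h2; rewrite h1; lia.
  have e : (r.-1 + 1) %% r = 0 by rewrite addn1 prednK // modnn.
  by apply/orP; right; rewrite eqxx /= e h1 eqxx.
Qed.

Lemma FF_reach k (v : Qvert n r) : FF d v <= k ->
  exists p, [/\ path (@Qadj n d r) start p, last start p = v & size p = FF d v].
Proof.
elim: k v => [|k IH] v hk.
  case: (eqVneq v start) => [->|nv].
    by exists [::]; rewrite FF_start.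
  have [w [_ hw]] := FF_pred nv; lia.
case: (eqVneq v start) => [->|nv].
  by exists [::]; rewrite FF_start.
have [w [hwv hw]] := FF_pred nv.
have [p [hp1 hp2 hp3]] := IH w (ltac:(lia)).
exists (rcons p v); split.
- by rewrite rcons_path hp1 hp2.
- by rewrite last_rcons.
- by rewrite size_rcons hp3.
Qed.
End H.

Unset Implicit Arguments.

Theorem mainTheorem7 (n d r : nat) (hn : 2 <= n) (hd : 1 <= d) (hr : 3 <= r)
  (hdr : d * r = n) (a : {ffun 'I_n -> bool}) (x : 'I_r) (x0 : 'I_r)
  (hx0 : val x0 = 0) :
  is_distance (@Qadj n d r) ([ffun => false], x0) (a, x)
    (hweight a +
     minn (r + x - 2 * leap1 d r a x) (2 * r - x - 2 * leap2 d r a x)).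
Proof.
split.
  have [p [h1 h2 h3]] := FF_reach hd hr hdr hx0 (leqnn (FF d (a, x))).
  by exists p; split.
move=> p hp hl.
have := FF_path hd hr hdr hx0 hp; rewrite hl (FF_start hd hr hdr hx0) add0n.
by [].
Qed.
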